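(* Let $n$ be a positive integer. The set $$\Big\{\tbinom{n}{k}\big(a^{\otimes k}\otimes(a^c)^{\otimes(n-k)}\big)^\vee\ :\ k=0,\ldots,n\Big\}$$ is a complete set of primitive orthogonal idempotents in $\mathrm{Sym}^n\mathbb{C}[e_1]$.
   Context: $\mathbb{C}[e_1]=\mathbb{R}[e_1]\otimes_\mathbb{R}\mathbb{C}$ is the commutative $\mathbb{C}$-algebra with basis $1,e_1$ and $e_1^2=-1$. $\mathbb{C}[e_1]^{\otimes n}$ is the $n$-fold tensor power over $\mathbb{C}$ with componentwise multiplication; $\mathfrak S_n$ acts by $\sigma(x_1\otimes\cdots\otimes x_n)=x_{\sigma^{-1}(1)}\otimes\cdots\otimes x_{\sigma^{-1}(n)}$; $x^\vee=\frac1{n!}\sum_{\sigma\in\mathfrak S_n}\sigma(x)$; $\mathrm{Sym}^n\mathbb{C}[e_1]$ is the subalgebra of fixed tensors. $a=\frac12(1+\sqrt{-1}e_1)$, $a^c=\frac12(1-\sqrt{-1}e_1)$. In a unital associative ring: idempotent $x^2=x$; orthogonal means pairwise products zero; a nonzero idempotent is primitive if not a sum of two nonzero orthogonal idempotents; a set of orthogonal idempotents is complete if it sums to $1$. *)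

(* Defs.v *)
From HB Require Import structures.
From mathcomp Require Import all_boot all_order all_fingroup all_algebra.
Set Implicit Arguments. Unset Strict Implicit. Unset Printing Implicit Defensive.
Import Order.TTheory GRing.Theory Num.Theory.
Local Open Scope ring_scope.

(* Concrete model of C[e1]^{(x) n} over C (any numClosedFieldType, e.g. the
   complex numbers): an element is its coordinate vector in the basis of pure
   tensors e_S := y_1 (x) ... (x) y_n with y_i = e1 if i \in S, y_i = 1 else.
   Componentwise multiplication gives e_S e_T = (-1)^{|S :&: T|} e_{S (+) T}. *)

Section TensorModel.
Variables (C : numClosedFieldType) (n : nat).

Definition tens := {ffun {set 'I_n} -> C}.

(* elements of C[e1]: pair (alpha, beta) stands for alpha + beta e1 *)
Definition ce1 := (C * C)%type.

Definition tmul (x y : tens) : tens :=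
  [ffun U => \sum_(S : {set 'I_n})
       x S * y ((S :\: U) :|: (U :\: S)) * (-1) ^+ #|S :&: ((S :\: U) :|: (U :\: S))|].

Definition tone : tens := [ffun U => (U == set0)%:R].

Definition tscale (c : C) (x : tens) : tens := [ffun U => c * x U].

Definition pure (x : 'I_n -> ce1) : tens :=
  [ffun S : {set 'I_n} => \prod_(i < n) (if i \in S then (x i).2 else (x i).1)].

(* sigma (x_1 (x) ... (x) x_n) = x_{sigma^-1 1} (x) ... ; on basis: e_S |-> e_{sigma S} *)
Definition tact (s : 'S_n) (x : tens) : tens := [ffun U : {set 'I_n} => x ((s^-1)%g @: U)].

Definition symz (x : tens) : tens :=
  tscale (n`!%:R)^-1 (\sum_(s : 'S_n) tact s x).

Definition in_Sym (x : tens) : Prop := forall s : 'S_n, tact s x = x.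

Definition idem (x : tens) : Prop := tmul x x = x.
Definition orth (x y : tens) : Prop := tmul x y = 0 /\ tmul y x = 0.

Definition primitive_Sym (x : tens) : Prop :=
  in_Sym x /\ x <> 0 /\ idem x /\
  ~ (exists y z : tens, in_Sym y /\ in_Sym z /\ y <> 0 /\ z <> 0 /\
        idem y /\ idem z /\ orth y z /\ x = y + z).

Definition a_el : ce1 := (2^-1, 'i / 2).
Definition ac_el : ce1 := (2^-1, - 'i / 2).

Definition Ek (k : nat) : tens :=
  tscale ('C(n, k))%:R
    (symz (pure (fun i : 'I_n => if (i < k)%N then a_el else ac_el))).

End TensorModel.

(* Main.v *)
Require Import Defs.
From HB Require Import structures.
From mathcomp Require Import all_boot all_order all_fingroup all_algebra.
From mathcomp Require Import alt primitive_action ring.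
Import Order.TTheory GRing.Theory Num.Theory.
Local Open Scope ring_scope.

Section Chi.
Variables (C : numClosedFieldType) (n : nat).
Local Notation tens := (tens C n).
Implicit Types (x y : tens) (T : {set 'I_n}).

Definition eps (T : {set 'I_n}) (i : 'I_n) : C := if i \in T then - 'i else 'i.
Definition wt T (S : {set 'I_n}) : C := \prod_i (if i \in S then eps T i else 1).
Definition chi T (x : tens) : C := \sum_S x S * wt T S.

Lemma eps2 T i : eps T i * eps T i = -1.
Proof. by rewrite /eps; case: ifP; rewrite ?mulrNN -expr2 sqrCi. Qed.

Lemma distr (F G : 'I_n -> C) :
  \sum_(S : {set 'I_n}) \prod_i (if i \in S then F i else G i) = \prod_i (F i + G i).
Proof. by rewrite bigA_distr. Qed.

Definition symd (S U : {set 'I_n}) := (S :\: U) :|: (U :\: S).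

Lemma symdK S : involutive (symd S).
Proof.
move=> V; apply/setP => i; rewrite /symd !inE.
by case: (i \in S); case: (i \in V).
Qed.

Lemma chi_mul T x y : chi T (tmul x y) = chi T x * chi T y.
Proof.
rewrite /chi /tmul.
under eq_bigr => U _ do rewrite ffunE big_distrl.
rewrite exchange_big /= big_distrl; apply: eq_bigr => S _.
rewrite big_distrr /= (reindex_inj (inv_inj (symdK S))) /=.
apply: eq_bigr => V _; rewrite -/(symd S _) symdK.
have key : (-1) ^+ #|S :&: V| * wt T (symd S V) = wt T S * wt T V.
  rewrite -prodr_const big_mkcond /wt -!big_split /=.
  apply: eq_bigr => i _; rewrite /symd !inE.
  by case: (i \in S); case: (i \in V) => /=; rewrite ?mulr1 ?mul1r ?eps2.
rewrite -mulrA key; ring.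
Qed.

Definition w T (U : {set 'I_n}) : C := \prod_i (if i \in U then - eps T i else 1).

Lemma chi_inv x U : \sum_T chi T x * w T U = 2%:R ^+ n * x U.
Proof.
rewrite /chi.
under eq_bigr => T _ do rewrite big_distrl.
rewrite exchange_big /=.
under eq_bigr => S _ do under eq_bigr => T _ do rewrite -mulrA.
under eq_bigr => S _ do rewrite -mulr_sumr.
pose e (b : bool) : C := if b then - 'i else 'i.
have inner S : \sum_T wt T S * w T U = (S == U)%:R * 2%:R ^+ n.
  transitivity (\sum_(T : {set 'I_n}) \prod_i (if i \in T then
      (if i \in S then e true else 1) * (if i \in U then - e true else 1)
    else (if i \in S then e false else 1) * (if i \in U then - e false else 1))).
    apply: eq_bigr => T _; rewrite /wt /w -big_split; apply: eq_bigr => i _ /=.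
    by rewrite /eps; case: (i \in T).
  rewrite distr; case: eqVneq => [<-|neq].
    rewrite mul1r (eq_bigr (fun _ => 2%:R)); first by rewrite prodr_const card_ord.
    move=> i _.
    rewrite /e; case: (i \in S); rewrite ?mulr1 //.
    by rewrite opprK mulNr mulrN -expr2 sqrCi opprK -mulr2n.
  have [i Hi] : exists i, (i \in S) != (i \in U).
    apply/existsP; apply: contraR neq => /existsPn H; apply/eqP/setP => i.
    by move: (H i); rewrite negbK => /eqP.
  rewrite mul0r (bigD1 i) //= /e; move: Hi.
  by case: (i \in S); case: (i \in U) => //= _; rewrite ?mulr1 ?mul1r; first [rewrite addNr mul0r | rewrite opprK subrr mul0r].
under eq_bigr => S _ do rewrite inner.
rewrite (bigD1 U) // eqxx mul1r mulrC big1 => [|S /negbTE ->]; first exact: addr0.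
by rewrite mul0r mulr0.
Qed.

Lemma chi_inj x y : (forall T, chi T x = chi T y) -> x = y.
Proof.
move=> H; apply/ffunP => U; apply: (@mulfI _ (2%:R ^+ n)).
  by rewrite expf_neq0 // pnatr_eq0.
by rewrite -!chi_inv; apply: eq_bigr => T _; rewrite H.
Qed.


Lemma chi0 T : chi T (0 : tens) = 0.
Proof. by rewrite /chi big1 // => S _; rewrite ffunE mul0r. Qed.

Lemma chi_tone T : chi T (tone C n) = 1.
Proof.
rewrite /chi (bigD1 set0) //= ffunE eqxx mul1r big1 ?addr0.
  by rewrite /wt big1 // => i _; rewrite in_set0.
by move=> S /negbTE nS; rewrite ffunE nS mul0r.
Qed.

Lemma chi_add T x y : chi T (x + y) = chi T x + chi T y.
Proof. by rewrite /chi -big_split; apply: eq_bigr => S _; rewrite ffunE mulrDl. Qed.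

Lemma chi_scale T c x : chi T (tscale c x) = c * chi T x.
Proof. by rewrite /chi mulr_sumr; apply: eq_bigr => S _; rewrite ffunE mulrA. Qed.

Lemma chi_sum T (I : finType) (F : I -> tens) : chi T (\sum_i F i) = \sum_i chi T (F i).
Proof.
rewrite /chi; under eq_bigr => S _ do rewrite sum_ffunE mulr_suml.
exact: exchange_big.
Qed.

Lemma chi_pure T f : chi T (pure f) = \prod_i ((f i).2 * eps T i + (f i).1).
Proof.
rewrite /chi -distr; apply: eq_bigr => S _; rewrite ffunE /wt -big_split.
by apply: eq_bigr => i _ /=; case: ifP; rewrite ?mulr1.
Qed.

Lemma memV (s : {perm 'I_n}) (A : {set 'I_n}) j : (j \in (s^-1)%g @: A) = (s j \in A).
Proof. by rewrite -{1}(permK s j) mem_imset //; exact: perm_inj. Qed.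

Lemma chi_tact T s x : chi T (tact s x) = chi ((s^-1)%g @: T) x.
Proof.
rewrite /chi (reindex_inj (imset_inj (@perm_inj _ s))) /=.
apply: eq_bigr => V _; rewrite ffunE.
have -> : (s^-1)%g @: (s @: V) = V.
  by apply/setP => j; rewrite memV mem_imset //; exact: perm_inj.
congr (_ * _); rewrite /wt (reindex_inj (@perm_inj _ s)) /=; apply: eq_bigr => j _.
rewrite mem_imset; last exact: perm_inj.
by rewrite /eps memV.
Qed.

Lemma chi_symz T x : chi T (symz x) = (n`!%:R)^-1 * \sum_(s : 'S_n) chi ((s^-1)%g @: T) x.
Proof. by rewrite /symz chi_scale chi_sum; under eq_bigr do rewrite chi_tact. Qed.

Lemma memVV (s t : {perm 'I_n}) (T : {set 'I_n}) :
  (t^-1)%g @: ((s^-1)%g @: T) = ((t * s)^-1)%g @: T.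
Proof. by apply/setP=> j; rewrite !memV permM. Qed.

Lemma chi_tact_symz T s x : chi T (tact s (symz x)) = chi T (symz x).
Proof.
rewrite chi_tact !chi_symz; congr (_ * _).
under eq_bigr do rewrite memVV.
by rewrite [RHS](reindex_inj (mulIg s)).
Qed.

Lemma symz_sym x : in_Sym (symz x).
Proof. by move=> s; apply: chi_inj => T; rewrite chi_tact_symz. Qed.

Lemma trans_sets (T T' : {set 'I_n}) : #|T| = #|T'| -> exists p : {perm 'I_n}, p @: T = T'.
Proof.
move=> eqc.
have tr := ntransitive_weak (max_card (mem T)) (Sym_trans 'I_n).
have h' : size (enum T') == #|T| by rewrite -cardE eqc.
pose t := enum_tuple T. pose t' := Tuple h'.
have [] := atransP2 tr (x := t) (y := t').
- by rewrite inE enum_uniq; apply/subsetP.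
- by rewrite inE enum_uniq; apply/subsetP.
move=> a _ eqt; exists a; apply/setP => x.
have -> : (x \in T') = (x \in val t') by rewrite /= mem_enum.
rewrite eqt /=.
by apply/imsetP/mapP => -[y]; rewrite ?mem_enum => yT ->; exists y; rewrite ?mem_enum.
Qed.

Lemma sym_const x T (T' : {set 'I_n}) : in_Sym x -> #|T| = #|T'| -> chi T x = chi T' x.
Proof.
move=> Hs /trans_sets [p <-].
by rewrite -{1}(Hs (p^-1)%g) chi_tact invgK.
Qed.

Lemma sum_chi_pure f : (forall i, (f i).1 = 2^-1) -> \sum_T chi T (pure f) = 1.
Proof.
move=> H1.
transitivity (\sum_(T : {set 'I_n}) \prod_i (if i \in T then (f i).2 * - 'i + (f i).1
    else (f i).2 * 'i + (f i).1)).
  by apply: eq_bigr => T _; rewrite chi_pure; apply: eq_bigr => i _; rewrite /eps; case: ifP.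
rewrite distr big1 // => i _; rewrite H1 mulrN.
have -> : forall a b : C, - a + b + (a + b) = b + b by move=> a b; ring.
by field.
Qed.

Lemma card_imsetV (s : {perm 'I_n}) (T : {set 'I_n}) : #|(s^-1)%g @: T| = #|T|.
Proof. by rewrite card_imset //; exact: perm_inj. Qed.

Lemma sum_chi_symz x :
  (\sum_T chi T (symz x)) = \sum_T chi T x.
Proof.
under eq_bigr do rewrite chi_symz.
rewrite -mulr_sumr exchange_big /=.
have H (s : {perm 'I_n}) : \sum_(T : {set 'I_n}) chi ((s^-1)%g @: T) x = \sum_(T : {set 'I_n}) chi T x.
  rewrite (reindex_inj (imset_inj (@perm_inj _ s))) /=; apply: eq_bigr => T _.
  suff -> : (s^-1)%g @: (s @: T) = T by [].
  by apply/setP => j; rewrite memV mem_imset //; exact: perm_inj.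
under eq_bigr do rewrite H.
rewrite sumr_const (card_Sn n) mulrnAr -mulrnAl -mulr_natr mulVf ?mul1r // pnatr_eq0 -lt0n; exact: fact_gt0.
Qed.

Lemma sum_chi_pure_ok : True. Proof. by []. Qed.

Definition fk k : 'I_n -> ce1 C := fun i => if (i < k)%N then a_el C else ac_el C.

Lemma fk_factor T k i : (fk k i).2 * eps T i + (fk k i).1 = ((i < k)%N == (i \in T))%:R.
Proof.
have hi : 'i * 'i = -1 :> C by rewrite -expr2 sqrCi.
rewrite /fk /eps /a_el /ac_el; case: (i < k)%N; case: (i \in T) => /=;
  rewrite ?mulrN ?mulNr ?opprK mulrAC hi; field.
all: by [].
Qed.

Lemma chi_pfk T k : chi T (pure (fk k)) = \prod_(i : 'I_n) ((i < k)%N == (i \in T))%:R.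
Proof. by rewrite chi_pure; apply: eq_bigr => i _; rewrite fk_factor. Qed.

Lemma cardlt k : (k <= n)%N -> #|[set i : 'I_n | (i < k)%N]| = k.
Proof.
move=> le_kn.
rewrite -sum1_card (eq_bigl (fun i : 'I_n => (i < k)%N)) => [|i]; last by rewrite inE.
by rewrite -(big_ord_widen _ (fun _ => 1%N) le_kn) sum1_card card_ord.
Qed.

Lemma chi_pfk0 T k : (k <= n)%N -> #|T| != k -> chi T (pure (fk k)) = 0.
Proof.
move=> le neq; rewrite chi_pfk.
have [i Hi] : exists i : 'I_n, ((i < k)%N == (i \in T)) = false.
  suff: [exists i : 'I_n, ~~ ((i < k)%N == (i \in T))] by move=> /existsP [i /negbTE Hi]; exists i.
  apply: contraR neq => /existsPn H.
  have -> : T = [set i : 'I_n | (i < k)%N].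
    by apply/setP => i; rewrite inE; move: (H i); rewrite negbK => /eqP ->.
  by rewrite cardlt.
by rewrite (bigD1 i) //= Hi mul0r.
Qed.

Lemma chi_symz0 T k : (k <= n)%N -> #|T| != k -> chi T (symz (pure (fk k))) = 0.
Proof.
move=> le neq; rewrite chi_symz big1 ?mulr0 // => s _.
by apply: chi_pfk0; rewrite // card_imsetV.
Qed.

Lemma chi_Ek T k : (k <= n)%N -> chi T (Ek C n k) = (#|T| == k)%:R.
Proof.
move=> le.
have -> : Ek C n k = tscale 'C(n, k)%:R (symz (pure (fk k))) by [].
rewrite chi_scale.
case: eqVneq => [eqk|neqk]; last by rewrite chi_symz0 ?mulr0.
set v := chi T (symz _).
have Hv : forall T', #|T'| = k -> chi T' (symz (pure (fk k))) = v.
  by move=> T' h; apply: sym_const; [exact: symz_sym | rewrite h eqk].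
have := sum_chi_symz (pure (fk k)).
rewrite sum_chi_pure; last by move=> i; rewrite /fk; case: ifP.
rewrite (bigID (fun T' : {set 'I_n} => #|T'| == k)) /= [X in _ + X]big1; last first.
  by move=> T' nk; apply: chi_symz0.
rewrite addr0 (eq_bigr (fun _ => v)); last by move=> T' /eqP; exact: Hv.
have cd : #|[set A : {set 'I_n} | #|A| == k]| = 'C(n, k) by rewrite card_draws card_ord.
rewrite sumr_const (_ : #|_| = 'C(n, k)); last by rewrite -cd; apply: eq_card => A; rewrite inE.
by move=> h; rewrite mulr_natl h.
Qed.

Lemma Ek_sym k : in_Sym (Ek C n k).
Proof.
move=> s; apply: chi_inj => T.
have -> : Ek C n k = tscale 'C(n, k)%:R (symz (pure (fk k))) by [].
by rewrite chi_tact [LHS]chi_scale [RHS]chi_scale -chi_tact chi_tact_symz.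
Qed.

End Chi.
Arguments chi {C n} T x.


Theorem lemma3p2 (C : numClosedFieldType) (n : nat) (hn : (0 < n)%N) :
  [/\ (forall k : 'I_n.+1, primitive_Sym (Ek C n k)),
      (forall k l : 'I_n.+1, k != l -> orth (Ek C n k) (Ek C n l))
    & \sum_(k < n.+1) Ek C n k = tone C n].
Proof.
have ordle (k : 'I_n.+1) : (k <= n)%N by have := ltn_ord k; rewrite ltnS.
split.
- move=> k; split; [exact: Ek_sym | split; [|split]].
  + move=> E0.
    have := chi_Ek C n [set i : 'I_n | (i < k)%N] k (ordle k).
    rewrite E0 chi0 cardlt ?ordle // eqxx => h.
    by move: h => /esym/eqP; rewrite pnatr_eq0.
  + apply: chi_inj => T; rewrite chi_mul chi_Ek ?ordle //.
    by rewrite -natrM mulnb andbb.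
  + move=> [y [z [sy [sz [y0 [z0 [iy [iz [[oyz ozy] e]]]]]]]]].
    have iy' : tmul y y = y by exact: iy.
    have iz' : tmul z z = z by exact: iz.
    have cy T : chi T y = chi T y * (#|T| == k)%:R.
      by rewrite -(chi_Ek C n T k (ordle k)) e chi_add mulrDr -!chi_mul iy' oyz chi0 addr0.
    have cz T : chi T z = chi T z * (#|T| == k)%:R.
      by rewrite -(chi_Ek C n T k (ordle k)) e chi_add mulrDr -!chi_mul iz' ozy chi0 add0r.
    pose T0 := [set i : 'I_n | (i < k)%N].
    have h0 : #|T0| = k by rewrite cardlt ?ordle.
    have : chi T0 y * (chi T0 y - 1) = 0.
      by rewrite mulrBr mulr1 -chi_mul iy' subrr.
    move/eqP; rewrite mulf_eq0 subr_eq0 => /orP [/eqP c0|/eqP c1].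
    * apply: y0; apply: chi_inj => T; rewrite chi0.
      case: (eqVneq #|T| k) => [hT|hT]; last by rewrite cy (negbTE hT) mulr0.
      by rewrite (@sym_const C n y T T0 sy) // hT h0.
    * apply: z0; apply: chi_inj => T; rewrite chi0.
      case: (eqVneq #|T| k) => [hT|hT]; last by rewrite cz (negbTE hT) mulr0.
      rewrite (@sym_const C n z T T0 sz); last by rewrite hT h0.
      have := chi_Ek C n T0 k (ordle k); rewrite e chi_add c1 h0 eqxx.
      by move=> h; apply: (@addrI _ 1); rewrite h addr0.
- move=> k l kl.
  have nkl (T : {set 'I_n}) : ((#|T| == k) && (#|T| == l)) = false.
    apply/negbTE/negP => /andP [/eqP a /eqP b].
    by move/eqP: kl; apply; apply: val_inj; rewrite /= -a -b.
  split; apply: chi_inj => T;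
    rewrite chi_mul !chi_Ek ?ordle // chi0 -natrM mulnb ?nkl // andbC nkl //.
apply: chi_inj => T; rewrite chi_sum chi_tone.
under eq_bigr => k _ do rewrite (chi_Ek C n T k (ordle k)).
have hT : (#|T| < n.+1)%N by have := max_card (mem T); rewrite card_ord ltnS.
rewrite (bigD1 (Ordinal hT)) //= eqxx big1 ?addr0 // => k nk.
suff -> : (#|T| == k) = false by [].
apply/negbTE; apply: contra nk => /eqP h; apply/eqP; apply: val_inj; by rewrite /= h.
Qed.
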